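(* Assume the setting (S) below. If $V$ is a proper $T$-submodule of $M$, then $e^*_0V=0$.
   Context: Setting (S): $\mathbb{F}$ is a field, $d\ge0$, and $(\{\theta_i\}_{i=0}^d;\{\theta^*_i\}_{i=0}^d;\{\zeta_i\}_{i=0}^d)$ are scalars in $\mathbb{F}$ satisfying: (C1) $\theta_i\ne\theta_j$, $\theta^*_i\ne\theta^*_j$ for $i\ne j$; (C2) $\zeta_0=1$, $\zeta_d\ne0$, $\sum_{i=0}^d\eta_{d-i}(\theta_0)\eta^*_{d-i}(\theta^*_0)\zeta_i\ne0$, where $\eta_i(\lambda)=\prod_{j=0}^{i-1}(\lambda-\theta_{d-j})$, $\eta^*_i(\lambda)=\prod_{j=0}^{i-1}(\lambda-\theta^*_{d-j})$; (C3) $\frac{\theta_{i-2}-\theta_{i+1}}{\theta_{i-1}-\theta_i}$ and $\frac{\theta^*_{i-2}-\theta^*_{i+1}}{\theta^*_{i-1}-\theta^*_i}$ are equal and independent of $i$ for $2\le i\le d-1$. Let $\tau_i(\lambda)=\prod_{j=0}^{i-1}(\lambda-\theta_j)$. For any such data satisfying (C1),(C3), $T$ denotes the associative $\mathbb{F}$-algebra with $1$ generated by $a,e_0,\dots,e_d,a^*,e^*_0,\dots,e^*_d$ with relations $e_ie_j=\delta_{ij}e_i$, $e^*_ie^*_j=\delta_{ij}e^*_i$, $\sum_ie_i=\sum_ie^*_i=1$, $a=\sum_i\theta_ie_i$, $a^*=\sum_i\theta^*_ie^*_i$, $e^*_ia^ke^*_j=0$ and $e_i{a^*}^ke_j=0$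 whenever $0\le i,j,k\le d$, $k<|i-j|$; $e^*_0Te^*_0$ is a commutative $\mathbb{F}$-algebra with identity $e^*_0$, and $\mu:\mathbb{F}[x_1,\dots,x_d]\to e^*_0Te^*_0$ is the surjective algebra homomorphism $x_i\mapsto e^*_0\tau_i(a)e^*_0$. It is assumed (the $\mu$-conjecture) that for every $d'\ge0$ and every data $\{\theta_i\},\{\theta^*_i\}$ of length $d'+1$ satisfying (C1),(C3), the corresponding $\mu$ is an isomorphism. For $1\le i\le d$ put $g_i=e^*_0\tau_i(a)e^*_0-\zeta_ie^*_0/((\theta^*_0-\theta^*_1)\cdots(\theta^*_0-\theta^*_i))$, $J=T(1-e^*_0)+\sum_{i=1}^dTg_i$, and $M=T/J$ as a left $T$-module. *)

(* Defs.v *)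
From HB Require Import structures.
From mathcomp Require Import all_boot all_order all_algebra.
From mathcomp Require Import mpoly.
Set Implicit Arguments. Unset Strict Implicit. Unset Printing Implicit Defensive.
Import Order.TTheory GRing.Theory Num.Theory.
Local Open Scope ring_scope.

(* Scalar sequences are functions nat -> F; only the values at 0..d matter. *)

Definition eta_poly (F : fieldType) (d : nat) (th : nat -> F) (i : nat) (l : F) : F :=
  \prod_(j < i) (l - th (d - j)%N).

Definition cond_C1 (F : fieldType) (d : nat) (th ths : nat -> F) : Prop :=
  (forall i j : nat, (i <= d)%N -> (j <= d)%N -> i != j -> th i != th j) /\
  (forall i j : nat, (i <= d)%N -> (j <= d)%N -> i != j -> ths i != ths j).

Definition cond_C2 (F : fieldType) (d : nat) (th ths ze : nat -> F) : Prop :=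
  [/\ ze 0%N = 1, ze d != 0 &
      \sum_(i < d.+1) eta_poly d th (d - i)%N (th 0%N) * eta_poly d ths (d - i)%N (ths 0%N)
        * ze i != 0].

Definition cond_C3 (F : fieldType) (d : nat) (th ths : nat -> F) : Prop :=
  exists beta : F, forall i : nat, (2 <= i)%N -> (i <= d.-1)%N ->
    (th (i - 2)%N - th i.+1) / (th i.-1 - th i) = beta /\
    (ths (i - 2)%N - ths i.+1) / (ths i.-1 - ths i) = beta.

(* The defining relations of T, evaluated at elements
   a, e_0..e_d, as (= a-star), es_0..es_d (= e-star_i) of an F-algebra A. *)
Definition T_relations (F : fieldType) (d : nat) (th ths : nat -> F)
    (A : algType F) (a : A) (e : 'I_d.+1 -> A) (as_ : A) (es : 'I_d.+1 -> A) : Prop :=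
  [/\ (forall i j : 'I_d.+1, e i * e j = (if i == j then e i else 0)),
      (forall i j : 'I_d.+1, es i * es j = (if i == j then es i else 0)),
      \sum_(i < d.+1) e i = 1 & \sum_(i < d.+1) es i = 1] /\
  [/\ a = \sum_(i < d.+1) th i *: e i,
      as_ = \sum_(i < d.+1) ths i *: es i,
      (forall (i j : 'I_d.+1) (k : nat), (k < `|(i : int) - (j : int)|)%N ->
         es i * a ^+ k * es j = 0) &
      (forall (i j : 'I_d.+1) (k : nat), (k < `|(i : int) - (j : int)|)%N ->
         e i * as_ ^+ k * e j = 0)].

(* (A; a, e, as, es) is the algebra T presented by the generators and
   relations above: the relations hold, and it has the universal property
   (unique algebra morphism to any F-algebra with elements satisfying them). *)
Definition is_T (F : fieldType) (d : nat) (th ths : nat -> F)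
    (A : algType F) (a : A) (e : 'I_d.+1 -> A) (as_ : A) (es : 'I_d.+1 -> A) : Prop :=
  T_relations th ths a e as_ es /\
  forall (B : algType F) (b : B) (eb : 'I_d.+1 -> B) (bs : B) (ebs : 'I_d.+1 -> B),
    T_relations th ths b eb bs ebs ->
    (exists f : {lrmorphism A -> B},
        [/\ f a = b, forall i, f (e i) = eb i, f as_ = bs & forall i, f (es i) = ebs i]) /\
    (forall f g : {lrmorphism A -> B},
        f a = g a -> (forall i, f (e i) = g (e i)) -> f as_ = g as_ ->
        (forall i, f (es i) = g (es i)) -> f =1 g).

Definition tau_eval (F : fieldType) (th : nat -> F) (A : algType F) (i : nat) (x : A) : A :=
  \prod_(j < i) (x - (th j)%:A).

Definition mu_gen (F : fieldType) (d : nat) (th : nat -> F)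
    (A : algType F) (a : A) (es : 'I_d.+1 -> A) (i : 'I_d) : A :=
  es ord0 * tau_eval th i.+1 a * es ord0.

(* mu : F[x_1..x_d] -> e^*_0 T e^*_0, x_i |-> e^*_0 tau_i(a) e^*_0, with
   identity e^*_0 (variable x_{i+1} is indexed by i : 'I_d). *)
Definition mu (F : fieldType) (d : nat) (th : nat -> F)
    (A : algType F) (a : A) (es : 'I_d.+1 -> A) (p : {mpoly F[d]}) : A :=
  \sum_(m <- msupp p) p@_m *: (es ord0 * \prod_(i < d) mu_gen th a es i ^+ m i).

Definition mu_is_iso (F : fieldType) (d : nat) (th : nat -> F)
    (A : algType F) (a : A) (es : 'I_d.+1 -> A) : Prop :=
  (forall p q : {mpoly F[d]}, mu th a es p = mu th a es q -> p = q) /\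
  (forall t : A, exists p : {mpoly F[d]}, mu th a es p = es ord0 * t * es ord0).

Definition mu_conjecture (F : fieldType) : Prop :=
  forall (d' : nat) (th ths : nat -> F), cond_C1 d' th ths -> cond_C3 d' th ths ->
  forall (A : algType F) (a : A) (e : 'I_d'.+1 -> A) (as_ : A) (es : 'I_d'.+1 -> A),
    is_T th ths a e as_ es -> mu_is_iso th a es.

Definition g_elt (F : fieldType) (d : nat) (th ths ze : nat -> F)
    (A : algType F) (a : A) (es : 'I_d.+1 -> A) (i : nat) : A :=
  es ord0 * tau_eval th i a * es ord0
  - (ze i / \prod_(j < i) (ths 0%N - ths j.+1)) *: es ord0.

Definition in_J (F : fieldType) (d : nat) (th ths ze : nat -> F)
    (A : algType F) (a : A) (es : 'I_d.+1 -> A) (t : A) : Prop :=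
  exists (u : A) (v : 'I_d -> A),
    t = u * (1 - es ord0) + \sum_(i < d) v i * g_elt th ths ze a es i.+1.

Definition is_left_module (F : fieldType) (A : algType F) (M : zmodType)
    (act : A -> M -> M) : Prop :=
  [/\ forall (t u : A) (m : M), act (t + u) m = act t m + act u m,
      forall (t : A) (m n : M), act t (m + n) = act t m + act t n,
      forall (t u : A) (m : M), act (t * u) m = act t (act u m) &
      forall m : M, act 1 m = m].

(* M is (isomorphic as a left A-module to) A / J: the A-module map
   t |-> t . m0 is surjective with kernel exactly J *)
Definition is_T_mod_J (F : fieldType) (d : nat) (th ths ze : nat -> F)
    (A : algType F) (a : A) (es : 'I_d.+1 -> A)
    (M : zmodType) (act : A -> M -> M) (m0 : M) : Prop :=
  [/\ is_left_module act,
      (forall m : M, exists t : A, act t m0 = m) &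
      (forall t : A, act t m0 = 0 <-> in_J th ths ze a es t)].

Definition proper_submodule (F : fieldType) (A : algType F) (M : zmodType)
    (act : A -> M -> M) (V : M -> Prop) : Prop :=
  [/\ V 0, forall m n, V m -> V n -> V (m + n),
      forall (t : A) m, V m -> V (act t m) & exists m, ~ V m].

(* Main.v *)
Require Import Defs.
From HB Require Import structures.
From mathcomp Require Import all_boot all_order all_algebra.
From mathcomp Require Import mpoly.
Local Open Scope ring_scope.
Import GRing.Theory.

Section Aux.
Variables (F : fieldType) (A : algType F) (M : zmodType) (act : A -> M -> M).
Hypothesis hmod : is_left_module act.
Variable m0 : M.

Lemma act0 m : act 0 m = 0.
Proof.
case: hmod => hD _ _ _.
have := hD 0 0 m; rewrite addr0 => /eqP; rewrite -subr_eq0 opprD addrA subrr add0r oppr_eq0.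
by move/eqP.
Qed.

Definition Pm (x : A) := exists c : F, act x m0 = act (c%:A) m0.

Lemma Pm_add x y : Pm x -> Pm y -> Pm (x + y).
Proof.
case: hmod => hD _ _ _ [c hc] [c' hc']; exists (c + c').
by rewrite hD hc hc' -hD scalerDl.
Qed.

Lemma Pm_mul x y : Pm x -> Pm y -> Pm (x * y).
Proof.
case: hmod => _ _ hM _ [c hc] [c' hc']; exists (c * c').
rewrite hM hc' -hM mulr_algr -[c' *: x]mulr_algl hM hc -hM.
by rewrite -scalerAl mul1r scalerA mulrC.
Qed.

Lemma Pm_scal k : Pm (k%:A).
Proof. by exists k. Qed.

Lemma Pm_scale k x : Pm x -> Pm (k *: x).
Proof. by move=> hx; rewrite -mulr_algl; apply: Pm_mul => //; apply: Pm_scal. Qed.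

Lemma Pm_exp x n : Pm x -> Pm (x ^+ n).
Proof.
move=> hx; elim: n => [|n IH]; first by rewrite expr0 -(scale1r 1); apply: Pm_scal.
by rewrite exprS; apply: Pm_mul.
Qed.

Lemma Pm0 : Pm 0.
Proof. by exists 0; rewrite scale0r. Qed.

Lemma Pm1 : Pm 1.
Proof. by exists 1; rewrite scale1r. Qed.
End Aux.
Arguments Pm {F A M}.
Arguments act0 {F A M act} hmod m.
Arguments Pm_add {F A M act} hmod {m0 x y}.
Arguments Pm_mul {F A M act} hmod {m0 x y}.
Arguments Pm_scale {F A M act} hmod {m0} k {x}.
Arguments Pm_exp {F A M act} hmod {m0 x} n.
Arguments Pm_scal {F A M} act m0 k.
Arguments Pm0 {F A M} act m0.
Arguments Pm1 {F A M} act m0.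

Theorem lemma9p1 (F : fieldType) (d : nat) (th ths ze : nat -> F)
    (hC1 : cond_C1 d th ths) (hC2 : cond_C2 d th ths ze) (hC3 : cond_C3 d th ths)
    (hmu : mu_conjecture F)
    (A : algType F) (a : A) (e : 'I_d.+1 -> A) (as_ : A) (es : 'I_d.+1 -> A)
    (hT : is_T th ths a e as_ es)
    (M : zmodType) (act : A -> M -> M) (m0 : M)
    (hM : is_T_mod_J th ths ze a es act m0)
    (V : M -> Prop) (hV : proper_submodule act V) :
  forall v : M, V v -> act (es ord0) v = 0.
Proof.
move=> v Vv.
case: hM => hmod hsurj hJ.
have [hD hD2 hMul h1] := hmod.
case: hV => V0 VD Vact [mbad Vbad].
have [_ hsur] := hmu d th ths hC1 hC3 A a e as_ es hT.
set e0 := es ord0.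
have hm0 : act e0 m0 = m0.
  have h : act (1 - e0) m0 = 0.
    apply/hJ; exists 1, (fun _ => 0).
    by rewrite mul1r big1 ?addr0 // => i _; rewrite mul0r.
  by rewrite -{2}(h1 m0) -(subrK e0 1) hD h add0r.
have Pgen : forall i : 'I_d, Pm act m0 (mu_gen th a es i).
  move=> i.
  have hg : act (g_elt th ths ze a es i.+1) m0 = 0.
    apply/hJ; exists 0, (fun j => if j == i then 1 else 0).
    rewrite mul0r add0r (bigD1 i) //= eqxx mul1r big1 ?addr0 //.
    by move=> j /negbTE ->; rewrite mul0r.
  have -> : mu_gen th a es i = g_elt th ths ze a es i.+1 +
     (ze i.+1 / \prod_(j < i.+1) (ths 0%N - ths j.+1)) *: e0.
    by rewrite /g_elt /mu_gen subrK.
  apply: (Pm_add hmod) => //; first by exists 0; rewrite hg scale0r (act0 hmod).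
  apply: (Pm_scale hmod) => //; exists 1; by rewrite scale1r hm0 h1.
have [t ht] := hsurj v.
have [p hp] := hsur t.
have Pmu : Pm act m0 (mu th a es p).
  rewrite /mu; apply: (big_ind (Pm act m0)).
  - exact: (Pm0 act m0).
  - by move=> x y; exact: (Pm_add hmod).
  - move=> m _; apply: (Pm_scale hmod) => //; apply: (Pm_mul hmod) => //.
      by exists 1; rewrite scale1r hm0 h1.
    apply: (big_ind (Pm act m0)); first exact: (Pm1 act m0).
      by move=> x y; exact: (Pm_mul hmod).
    by move=> i _; apply: (Pm_exp hmod) => //; apply: Pgen.
have hev : act e0 v = act (mu th a es p) m0.
  rewrite hp -ht -hMul.
  have h : act (e0 * t * (1 - e0)) m0 = 0.
    apply/hJ; exists (e0 * t), (fun _ => 0).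
    by rewrite big1 ?addr0 // => i _; rewrite mul0r.
  have E : e0 * t = e0 * t * (1 - e0) + e0 * t * e0 by rewrite mulrBr mulr1 subrK.
  by rewrite {1}E hD h add0r.
case: Pmu => c hc.
have [c0|cn0] := eqVneq c 0.
  by rewrite hev hc c0 scale0r (act0 hmod).
exfalso; apply: Vbad.
have Vm0 : V m0.
  have : V (act (c^-1%:A) (act e0 v)) by apply: (Vact); apply: (Vact).
  by rewrite hev hc -hMul -scalerAl mul1r scalerA mulVf // scale1r h1.
have [s <-] := hsurj mbad.
by apply: (Vact).
Qed.
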